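(* Every maximal finitely non-Hausdorff subset of a topological space $X$ is closed in $X$.
   Context: A non-empty subset $A$ of a topological space $X$ is called finitely non-Hausdorff if for every non-empty finite subset $F\subseteq A$ and every family $\{U_x:x\in F\}$ where each $U_x$ is an open neighborhood of $x$, we have $\bigcap_{x\in F}U_x\neq\emptyset$. It is a maximal finitely non-Hausdorff subset if moreover every finitely non-Hausdorff subset $B$ of $X$ with $A\subseteq B$ satisfies $B=A$. *)

(* Defs.v *)
From HB Require Import structures.
From mathcomp Require Import all_boot all_order all_algebra.
From mathcomp Require Import all_classical all_reals all_analysis.
Set Implicit Arguments. Unset Strict Implicit. Unset Printing Implicit Defensive.
Local Open Scope classical_set_scope.

(* A family indexed by F is
   represented by a function U : X -> set X (values outside F irrelevant). *)
Definition finitely_non_hausdorff {X : topologicalType} (A : set X) : Prop :=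
  A !=set0 /\
  forall (F : set X), finite_set F -> F !=set0 -> F `<=` A ->
  forall (U : X -> set X), (forall x, F x -> open (U x) /\ U x x) ->
  \bigcap_(x in F) U x !=set0.

Definition maximal_finitely_non_hausdorff {X : topologicalType} (A : set X) : Prop :=
  finitely_non_hausdorff A /\
  forall B : set X, finitely_non_hausdorff B -> A `<=` B -> B = A.

(* Main.v *)
Require Import Defs.
From mathcomp Require Import all_boot all_order all_algebra.
From mathcomp Require Import all_classical all_reals all_analysis.
Local Open Scope classical_set_scope.

Lemma closure_fnh (X : topologicalType) (A : set X) :
  finitely_non_hausdorff A -> finitely_non_hausdorff (closure A).
Proof.
move=> [[a0 Aa0] HA]; split; first by exists a0; exact: subset_closure.
move=> F Ffin [x0 Fx0] FA U HU.
have ex : forall x, exists a, F x -> A a /\ U x a.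
  move=> x; have [Fx|nFx] := pselect (F x); last by exists a0.
  have [oU Ux] := HU x Fx.
  have := FA x Fx (U x) (open_nbhs_nbhs (conj oU Ux)).
  by move=> [a [Aa Ua]]; exists a.
have [a Ha] := choice ex.
pose D b := F `&` [set x | a x = b].
pose W b := \bigcap_(x in D b) U x.
have nW : forall b, (a @` F) b -> nbhs b (W b).
  move=> b [x Fx <-].
  have Dfin : finite_set (D (a x)) by apply: (sub_finite_set _ Ffin) => y [].
  rewrite /W -(fset_setK Dfin); apply: filter_bigI => y.
  rewrite in_fset_set // inE => -[Fy /= ay].
  rewrite -ay; apply: open_nbhs_nbhs; split; [exact: (HU y Fy).1|].
  exact: (Ha y Fy).2.
pose V b := interior (W b).
have [z Hz] : \bigcap_(b in a @` F) V b !=set0.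
  apply: HA.
  - exact: finite_image.
  - by exists (a x0), x0.
  - by move=> b [x Fx <-]; exact: (Ha x Fx).1.
  - move=> b Fb; split; first exact: open_interior.
    exact: nW.
exists z => x Fx.
have : V (a x) z by apply: Hz; exists x.
move=> /interior_subset; apply; split => //.
Qed.

Theorem corollary2p6 (X : topologicalType) (A : set X) :
  maximal_finitely_non_hausdorff A -> closed A.
Proof.
move=> [HA Hmax]; rewrite /closed.
by rewrite (Hmax _ (@closure_fnh _ _ HA) (@subset_closure _ A)).
Qed.
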